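(* Let $k \ge 1$ be an integer and $t > 0$ a real number with $t \ge k-1$. Let $(n_s)_{s \ge 1}$ be a sequence of nonnegative integers with only finitely many nonzero terms, and set $N_{\mathrm{seen}} = \sum_{s \ge 1} n_s$. Define $$\widehat{N}_{\mathrm{unseen}}(t) = \sum_{s=1}^{k} h_s\, n_s, \qquad h_s = -(-t)^s\, \mathbb{P}\!\left(\mathrm{Bin}\!\left(k, \tfrac{1}{t+1}\right) \ge s\right),$$ where $\mathrm{Bin}(k,p)$ denotes a binomial random variable with $k$ trials and success probability $p$. Then $$\widehat{N}_{\mathrm{unseen}}(t) \le e^{\frac{kt}{t+1}}\, N_{\mathrm{seen}}.$$
   Context: $n_s$ is interpreted as the number of distinct items observed exactly $s$ times in a sample; $\widehat{N}_{\mathrm{unseen}}(t)$ is the smoothed Good–Turing estimator with truncation level $k$ and extrapolation factor $t$. *)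

(* Defs.v *)
From HB Require Import structures.
From mathcomp Require Import all_boot all_order all_algebra.
From mathcomp Require Import reals.
From mathcomp Require Import sequences exp.
Set Implicit Arguments. Unset Strict Implicit. Unset Printing Implicit Defensive.
Import Order.TTheory GRing.Theory Num.Theory.
Local Open Scope ring_scope.

Definition binom_tail {R : realType} (k s : nat) (p : R) : R :=
  \sum_(s <= j < k.+1) ('C(k, j))%:R * p ^+ j * (1 - p) ^+ (k - j).

Definition sgt_coef {R : realType} (k : nat) (t : R) (s : nat) : R :=
  - ((- t) ^+ s) * binom_tail k s (t + 1)^-1.

Definition N_unseen {R : realType} (k : nat) (t : R) (n : nat -> nat) : R :=
  \sum_(1 <= s < k.+1) sgt_coef k t s * (n s)%:R.

(* N_seen = sum_{s>=1} n_s, where n_s = 0 for s > M *)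
Definition N_seen {R : realType} (M : nat) (n : nat -> nat) : R :=
  \sum_(1 <= s < M.+1) (n s)%:R.

(* Main.v *)
Require Import Defs.
Set Warnings "-all".
From HB Require Import structures.
From mathcomp Require Import all_boot all_order all_algebra.
From mathcomp Require Import reals.
From mathcomp Require Import sequences exp.
From mathcomp Require Import zify ring lra.
Import Order.TTheory GRing.Theory Num.Theory.
Local Open Scope ring_scope.

Lemma binmul (k s i : nat) : (s + i <= k)%N ->
  ('C(k, i + s) * 'C(i + s, s) = 'C(k, s) * 'C(k - s, i))%N.
Proof.
move=> hk.
have hf : (0 < s`! * i`! * (k - (i + s))`!)%N by rewrite !muln_gt0 !fact_gt0.
apply/eqP; rewrite -(eqn_pmul2r hf); apply/eqP.
have h1 := bin_fact (leq_addl i s : (s <= i + s)%N).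
rewrite addnK in h1.
have h2 : (i + s <= k)%N by rewrite addnC.
have h2' := bin_fact h2.
have h3 := bin_fact (leq_trans (leq_addr i s) hk : (s <= k)%N).
have h4 : (i <= k - s)%N by rewrite leq_subRL // ?(leq_trans (leq_addr i s) hk).
have h4' := bin_fact h4.
have e : (k - s - i = k - (i + s))%N by rewrite -subnDA addnC.
rewrite e in h4'.
transitivity ('C(k, i + s) * (('C(i + s, s) * (s`! * i`!)) * (k - (i + s))`!))%N.
  by rewrite -!mulnA; congr (_ * _)%N; rewrite !mulnA; congr (_ * _)%N; rewrite mulnC.
rewrite h1 h2'.
transitivity ('C(k, s) * (s`! * ('C(k - s, i) * (i`! * (k - (i + s))`!))))%N.
  by rewrite h4' h3.
lia.
Qed.
Lemma tail_ge0 {R : realType} (k s : nat) (p : R) : 0 <= p <= 1 -> 0 <= binom_tail k s p.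
Proof.
move=> /andP[p0 p1]; rewrite /binom_tail; apply: sumr_ge0 => j _.
by rewrite !mulr_ge0 ?exprn_ge0 ?subr_ge0.
Qed.

Lemma tail_le {R : realType} (k s : nat) (p : R) : 0 <= p <= 1 -> (s <= k)%N ->
  binom_tail k s p <= ('C(k, s))%:R * p ^+ s.
Proof.
move=> /andP[p0 p1] sk; rewrite /binom_tail.
rewrite -{1}(add0n s) big_addn.
have -> : (k.+1 - s = (k - s).+1)%N by rewrite subSn.
apply: (@le_trans _ _ (\sum_(0 <= i < (k - s).+1)
   ('C(k, s))%:R * p ^+ s * (('C(k - s, i))%:R * p ^+ i * (1 - p) ^+ (k - s - i)))).
  apply: ler_sum_nat => i /andP[_ hi].
  have his : (s + i <= k)%N by lia.
  have hb : ('C(k, i + s) <= 'C(k, s) * 'C(k - s, i))%N.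
    rewrite -binmul // leq_pmulr // bin_gt0; lia.
  have -> : (k - s - i = k - (i + s))%N by lia.
  rewrite exprD.
  have hb' : ('C(k, i + s))%:R <= ('C(k, s))%:R * ('C(k - s, i))%:R :> R.
    by rewrite -natrM ler_nat.
  have q0 : 0 <= p ^+ i * p ^+ s * (1 - p) ^+ (k - (i + s)).
    by rewrite !mulr_ge0 ?exprn_ge0 ?subr_ge0.
  have -> : ('C(k, i + s))%:R * (p ^+ i * p ^+ s) * (1 - p) ^+ (k - (i + s)) =
     ('C(k, i + s))%:R * (p ^+ i * p ^+ s * (1 - p) ^+ (k - (i + s))) :> R by ring.
  apply: le_trans (ler_wpM2r q0 hb') _.
  by rewrite le_eqVlt; apply/orP; left; apply/eqP; ring.
rewrite -mulr_sumr.
suff -> : \sum_(0 <= i < (k - s).+1)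
     ('C(k - s, i))%:R * p ^+ i * (1 - p) ^+ (k - s - i) = 1 :> R by rewrite mulr1.
rewrite big_mkord.
have := exprDn (1 - p) p (k - s).
rewrite subrK expr1n => E; rewrite [RHS]E.
apply: eq_bigr => i _.
by rewrite -[RHS]mulr_natl; ring.
Qed.
Lemma coef_le {R : realType} (k s : nat) (t : R) : (s <= k)%N -> 0 < t ->
  sgt_coef k t s <= expR (k%:R * t / (t + 1)).
Proof.
move=> sk t0.
set p := (t + 1)^-1.
have t10 : 0 < t + 1 by lra.
have p0 : 0 <= p by rewrite invr_ge0 ltW.
have p1 : p <= 1 by rewrite invf_le1 //; lra.
have pp : 0 <= p <= 1 by rewrite p0 p1.
have q0 : 0 <= t * p by rewrite mulr_ge0 // ltW.
rewrite /sgt_coef -/p.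
apply: (@le_trans _ _ (t ^+ s * binom_tail k s p)).
  apply: ler_wpM2r; first exact: tail_ge0.
  apply: le_trans (ler_norm _) _.
  by rewrite normrN normrX normrN gtr0_norm.
apply: (@le_trans _ _ (t ^+ s * (('C(k, s))%:R * p ^+ s))).
  by apply: ler_wpM2l; [rewrite exprn_ge0 // ltW | exact: tail_le].
have -> : t ^+ s * (('C(k, s))%:R * p ^+ s) = (t * p) ^+ s *+ 'C(k, s).
  by rewrite exprMn -mulr_natl; ring.
apply: (@le_trans _ _ ((t * p + 1) ^+ k)).
  have sk1 : (s < k.+1)%N by rewrite ltnS.
  rewrite exprD1n (bigD1 (Ordinal sk1)) //=.
  rewrite lerDl; apply: sumr_ge0 => i _; exact: mulrn_wge0 (exprn_ge0 _ q0).
apply: (@le_trans _ _ (expR (t * p) ^+ k)).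
  apply: lerXn2r; rewrite ?nnegrE ?addr_ge0 ?expR_ge0 //.
  by rewrite addrC expR_ge1Dx.
by rewrite -expRM_natl mulrA.
Qed.
Theorem theorem1 (R : realType) (k : nat) (t : R) (n : nat -> nat) (M : nat) :
  (1 <= k)%N -> 0 < t -> (k - 1)%:R <= t ->
  (forall s : nat, (M < s)%N -> n s = 0%N) ->
  N_unseen k t n <= expR (k%:R * t / (t + 1)) * N_seen M n.
Proof.
move=> k1 t0 _ hM.
set C := expR _.
rewrite /N_unseen /N_seen.
apply: (@le_trans _ _ (\sum_(1 <= s < k.+1) C * (n s)%:R)).
  apply: ler_sum_nat => s /andP[_ hs].
  by apply: ler_wpM2r => //; apply: coef_le.
rewrite -mulr_sumr ler_wpM2l ?expR_ge0 //.
set m := maxn k M.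
have e1 : \sum_(1 <= s < m.+1) (n s)%:R = \sum_(1 <= s < M.+1) (n s)%:R :> R.
  rewrite (@big_cat_nat _ _ _ M.+1) //=; last by rewrite ltnS leq_maxr.
  have -> : \sum_(M.+1 <= s < m.+1) (n s)%:R = 0 :> R.
    by rewrite big_nat big1 // => s /andP[hs _]; rewrite hM.
  by rewrite addr0.
rewrite -e1 (@big_cat_nat _ _ _ k.+1 1 m.+1) //=; last by rewrite ltnS leq_maxl.
by rewrite lerDl; apply: sumr_ge0 => s _.
Qed.
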